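(* Let $\mathcal{H}$ be an infinite dimensional complex Hilbert space and let $\phi:\mathcal{B}(\mathcal{H})\to\mathcal{B}(\mathcal{H})$ be a bijective map preserving the Douglas solution in both directions. Then $\phi$ preserves range inclusion in both directions: for all $A,B\in\mathcal{B}(\mathcal{H})$, $\operatorname{ran}A\subseteq\operatorname{ran}B$ if and only if $\operatorname{ran}\phi(A)\subseteq\operatorname{ran}\phi(B)$. Moreover, for every $B\in\mathcal{B}(\mathcal{H})$ of rank one, $\phi(B)$ is of rank one, and the assignment $\operatorname{ran}A\mapsto\operatorname{ran}\phi(A)$ is a well-defined map which restricts to a bijection of the set of one-dimensional subspaces $\{\mathbb{C}e: e\in\mathcal{H}, e\neq0\}$ onto itself.
   Context: $\mathcal{B}(\mathcal{H})$ denotes the algebra of all bounded linear operators on $\mathcal{H}$. For $A,B\in\mathcal{B}(\mathcal{H})$ with $\operatorname{ran}A\subseteq\operatorname{ran}B$, the Douglas solution of $A=BX$ is the unique $D\in\mathcal{B}(\mathcal{H})$ with $BD=A$ and $\operatorname{ran}D\subseteq(\ker B)^\perp$ (it exists exactly when $\operatorname{ran}A\subseteq\operatorname{ran}B$). A map $\phi:\mathcal{B}(\mathcal{H})\to\mathcal{B}(\mathcal{H})$ preserves the Douglas solution in both directions if for all $A,B,X\in\mathcal{B}(\mathcal{H})$: $X$ is the Douglas solution of $A=BX$ if and only if $\phi(X)$ is the Douglas solution of $\phi(A)=\phi(B)Y$. *)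

(* Defs.v *)
(* A complex Hilbert space is encoded as an
   lmodType over R[i] together with an inner product satisfying the Hilbert
   space axioms (including completeness w.r.t. the induced norm). *)
From mathcomp Require Import all_boot all_algebra.
From mathcomp Require Import complex.
From mathcomp Require Import reals.
Set Implicit Arguments. Unset Strict Implicit. Unset Printing Implicit Defensive.
Import GRing.Theory Num.Theory.
Local Open Scope ring_scope.

Section Hilbert.
Variables (R : realType) (V : lmodType R[i]) (ip : V -> V -> R[i]).

Definition is_inner_product : Prop :=
  [/\ forall (a : R[i]) (x y z : V), ip (a *: x + y) z = a * ip x z + ip y z,
      forall x y : V, ip x y = (ip y x)^*,
      forall x : V, 0 <= ip x x
    & forall x : V, ip x x = 0 -> x = 0].

Definition nsq (x : V) : R[i] := ip x x.

Definition cauchy_seq (u : nat -> V) : Prop :=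
  forall e : R[i], 0 < e -> exists N : nat, forall m n : nat,
    (N <= m)%N -> (N <= n)%N -> nsq (u m - u n) < e.

Definition converges_to (u : nat -> V) (l : V) : Prop :=
  forall e : R[i], 0 < e -> exists N : nat, forall n : nat,
    (N <= n)%N -> nsq (u n - l) < e.

Definition complete_ip : Prop :=
  forall u : nat -> V, cauchy_seq u -> exists l : V, converges_to u l.

Definition infinite_dimensional : Prop :=
  forall n : nat, exists v : 'I_n -> V,
    forall c : 'I_n -> R[i], \sum_(i < n) c i *: v i = 0 -> forall i, c i = 0.

Definition is_hilbert_space : Prop :=
  [/\ is_inner_product, complete_ip & infinite_dimensional].

Definition is_bounded_linear (T : V -> V) : Prop :=
  (forall (a : R[i]) (x y : V), T (a *: x + y) = a *: T x + T y) /\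
  exists M : R[i], 0 <= M /\ forall x : V, nsq (T x) <= M * nsq x.

Definition BH : Type := { T : V -> V | is_bounded_linear T }.

Definition op (A : BH) : V -> V := proj1_sig A.

Definition ran (A : BH) : V -> Prop := fun y => exists x : V, op A x = y.

Definition ran_sub (A B : BH) : Prop := forall y, ran A y -> ran B y.

Definition same_set (P Q : V -> Prop) : Prop := forall y, P y <-> Q y.

(* X is the Douglas solution of A = B X : B X = A and ran X ⊆ (ker B)^⊥ *)
Definition douglas_solution (A B X : BH) : Prop :=
  (forall x : V, op B (op X x) = op A x) /\
  (forall x y : V, op B y = 0 -> ip (op X x) y = 0).

Definition preserves_douglas_both (phi : BH -> BH) : Prop :=
  forall A B X : BH, douglas_solution A B X <-> douglas_solution (phi A) (phi B) (phi X).

Definition is_line (L : V -> Prop) : Prop :=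
  exists e : V, e <> 0 /\ forall y, L y <-> exists c : R[i], y = c *: e.

Definition rank_one (A : BH) : Prop := is_line (ran A).

(* the induced assignment ran A |-> ran phi(A) sends L to L' *)
Definition maps_subspace (phi : BH -> BH) (L L' : V -> Prop) : Prop :=
  (exists A : BH, same_set (ran A) L) /\
  (forall A : BH, same_set (ran A) L -> same_set (ran (phi A)) L').

End Hilbert.

(* Main.v *)
Require Import Defs.
From mathcomp Require Import all_boot all_order all_algebra.
From mathcomp Require Import complex.
From mathcomp Require Import reals.
From mathcomp Require boolp.
From mathcomp Require Import ring lra.
Import Order.TTheory GRing.Theory Num.Theory.
Set Implicit Arguments. Unset Strict Implicit. Unset Printing Implicit Defensive.
Local Open Scope ring_scope.

Section Basic.
Variable R : realType.
Notation cRe := (@complex.Re R).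
Notation cIm := (@complex.Im R).
Lemma ReD (x y : R[i]) : cRe (x + y) = cRe x + cRe y.
Proof. by case: x => a b; case: y => c d. Qed.
Lemma ReN (x : R[i]) : cRe (- x) = - cRe x.
Proof. by case: x => a b. Qed.
Lemma ReJ (x : R[i]) : cRe (x^*) = cRe x.
Proof. by case: x => a b. Qed.
Lemma ImJ (x : R[i]) : cIm (x^*) = - cIm x.
Proof. by case: x => a b. Qed.
Lemma Re_real (t : R) (y : R[i]) : cRe ((t%:C)%C * y) = t * cRe y.
Proof. case: y => c d /=. by rewrite mul0r subr0. Qed.
Lemma Re_mi (y : R[i]) : cRe ((-'i)%C * y) = cIm y.
Proof. case: y => c d /=. lra. Qed.
Lemma Re_C (t : R) : cRe ((t%:C)%C) = t.
Proof. by []. Qed.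
Lemma complex_eq0 (y : R[i]) : cRe y = 0 -> cIm y = 0 -> y = 0.
Proof. by case: y => c d /= -> ->. Qed.
Lemma real_ge0 (y : R[i]) : 0 <= y -> y = ((cRe y)%:C)%C.
Proof. move=> /ger0_Im; by case: y => c d /= ->. Qed.
End Basic.

Section IP.
Variables (R : realType) (V : lmodType R[i]) (ip : V -> V -> R[i]).
Hypothesis hI : is_inner_product ip.
Notation cRe := (@complex.Re R).
Notation cIm := (@complex.Im R).

Lemma ipDZl a x y z : ip (a *: x + y) z = a * ip x z + ip y z.
Proof. by case: hI => h _ _ _; apply: h. Qed.
Lemma ipC x y : ip x y = (ip y x)^*.
Proof. by case: hI => _ h _ _; apply: h. Qed.
Lemma ip_ge0 x : 0 <= ip x x.
Proof. by case: hI => _ _ h _; apply: h. Qed.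
Lemma ip_eq0 x : ip x x = 0 -> x = 0.
Proof. by case: hI => _ _ _ h; apply: h. Qed.

Lemma ip0l z : ip 0 z = 0.
Proof.
have := ipDZl 1 0 0 z; rewrite scaler0 addr0 mul1r => H.
by move: H; rewrite -{1}(addr0 (ip 0 z)) => /addrI ->.
Qed.
Lemma ipDl x y z : ip (x + y) z = ip x z + ip y z.
Proof. by rewrite -[x]scale1r ipDZl mul1r scale1r. Qed.
Lemma ipZl a x z : ip (a *: x) z = a * ip x z.
Proof. by rewrite -[a *: x]addr0 ipDZl ip0l addr0. Qed.
Lemma ipNl x z : ip (- x) z = - ip x z.
Proof. by rewrite -scaleN1r ipZl mulN1r. Qed.
Lemma ipBl x y z : ip (x - y) z = ip x z - ip y z.
Proof. by rewrite ipDl ipNl. Qed.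
Lemma ipDr x y z : ip z (x + y) = ip z x + ip z y.
Proof. by rewrite ipC ipDl rmorphD [ip z x]ipC [ip z y]ipC. Qed.
Lemma ipZr a x z : ip z (a *: x) = a^* * ip z x.
Proof. by rewrite ipC ipZl rmorphM [ip z x]ipC. Qed.
Lemma ip0r z : ip z 0 = 0.
Proof. by rewrite ipC ip0l rmorph0. Qed.
Lemma ipNr x z : ip z (- x) = - ip z x.
Proof. by rewrite ipC ipNl rmorphN [ip z x]ipC. Qed.
Lemma ipBr x y z : ip z (x - y) = ip z x - ip z y.
Proof. by rewrite ipDr ipNr. Qed.

Definition N x := cRe (ip x x).
Definition P x y := cRe (ip x y).

Lemma nsqE x : ip x x = ((N x)%:C)%C.
Proof. exact: real_ge0 (ip_ge0 x). Qed.
Lemma N_ge0 x : 0 <= N x.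
Proof. by have := ip_ge0 x; rewrite nsqE lecR. Qed.
Lemma N_eq0 x : N x = 0 -> x = 0.
Proof. by move=> h; apply: ip_eq0; rewrite nsqE h. Qed.
Lemma PC x y : P x y = P y x.
Proof. by rewrite /P ipC ReJ. Qed.
Lemma PDl x y z : P (x + y) z = P x z + P y z.
Proof. by rewrite /P ipDl ReD. Qed.
Lemma PNl x z : P (- x) z = - P x z.
Proof. by rewrite /P ipNl ReN. Qed.
Lemma PBl x y z : P (x - y) z = P x z - P y z.
Proof. by rewrite PDl PNl. Qed.
Lemma PDr x y z : P z (x + y) = P z x + P z y.
Proof. by rewrite PC PDl !(PC z). Qed.
Lemma PNr x z : P z (- x) = - P z x.
Proof. by rewrite PC PNl PC. Qed.
Lemma PBr x y z : P z (x - y) = P z x - P z y.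
Proof. by rewrite PDr PNr. Qed.
Lemma PZl (t : R) x z : P (((t%:C)%C) *: x) z = t * P x z.
Proof. by rewrite /P ipZl Re_real. Qed.
Lemma PZr (t : R) x z : P z (((t%:C)%C) *: x) = t * P z x.
Proof. by rewrite PC PZl PC. Qed.
Lemma PP x : P x x = N x.
Proof. by []. Qed.
Lemma ND x y : N (x + y) = N x + N y + 2 * P x y.
Proof.
rewrite -!PP PDl !PDr (PC y x); ring.
Qed.
Lemma NB x y : N (x - y) = N x + N y - 2 * P x y.
Proof.
rewrite -!PP PBl !PBr (PC y x); ring.
Qed.
Lemma NZ (t : R) x : N (((t%:C)%C) *: x) = t * t * N x.
Proof. by rewrite -!PP PZl PZr mulrA. Qed.
Lemma NN x : N (- x) = N x.
Proof. by rewrite -!PP PNl PNr opprK. Qed.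

Lemma P_le x y (d : R) : 0 < d -> 2 * P x y <= d * N x + N y / d.
Proof.
move=> d0.
have h := N_ge0 ((d%:C)%C *: x - y).
rewrite NB NZ PZl in h.
have hd : d * (d * d * N x + N y - 2 * (d * P x y)) >= 0 by rewrite mulr_ge0 // ltW.
have e : d * (d * N x + N y / d - 2 * P x y) = d * d * N x + N y - 2 * (d * P x y).
  by field; rewrite gt_eqF.
have : 0 <= d * (d * N x + N y / d - 2 * P x y) by rewrite e.
rewrite pmulr_rge0 // subr_ge0 //.
Qed.

Lemma conj_mi : (- 'i%C)^* = 'i%C :> R[i].
Proof. by apply/eqP; rewrite eq_complex /= oppr0 opprK !eqxx. Qed.
Lemma Re_i (y : R[i]) : cRe ('i%C * y) = - cIm y.
Proof. case: y => c d /=. lra. Qed.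

Lemma ip_zero x y : P x y = 0 -> P x (- 'i%C *: y) = 0 -> ip x y = 0.
Proof.
move=> h1; rewrite /P ipZr conj_mi Re_i => /eqP; rewrite oppr_eq0 => /eqP h2.
exact: complex_eq0.
Qed.

Lemma Re_mulr (w : R[i]) (t : R) : cRe (w * (t%:C)%C) = cRe w * t.
Proof. by rewrite mulrC Re_real mulrC. Qed.
Lemma Rcc_ge0 (c : R[i]) : 0 <= cRe (c * c^*).
Proof. case: c => a b /=. nra. Qed.
Lemma Rcc_eq0 (c : R[i]) : cRe (c * c^*) = 0 -> c = 0.
Proof.
case: c => a b /= h.
have ha : a = 0 by nra.
have hb : b = 0 by nra.
by rewrite ha hb.
Qed.
Lemma NZc c y : N (c *: y) = cRe (c * c^*) * N y.
Proof. by rewrite /N ipZl ipZr mulrA nsqE Re_mulr. Qed.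
Lemma P_sc v w : P v (ip v w *: w) = cRe (ip v w * (ip v w)^*).
Proof. by rewrite /P ipZr mulrC. Qed.

Lemma CS v w : cRe (ip v w * (ip v w)^*) <= N v * N w.
Proof.
set q := cRe _.
have [w0|wn0] := eqVneq w 0.
  by rewrite /q w0 ip0r mul0r /= /N ip0l /= mulr0.
have Nw : 0 < N w.
  rewrite lt0r N_ge0 andbT; apply/eqP => h; move: wn0; by rewrite (@N_eq0 w h) eqxx.
have := @P_le v (ip v w *: w) (N w) Nw.
rewrite P_sc NZc -/q => h.
have e : q * N w / N w = q by field; rewrite gt_eqF.
rewrite e in h.
have := N_ge0 v. nra.
Qed.

Lemma bound_of (T : V -> V) (m : R) : 0 <= m -> (forall x, N (T x) <= m * N x) ->
  exists M : R[i], 0 <= M /\ forall x, nsq ip (T x) <= M * nsq ip x.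
Proof.
move=> m0 h; exists ((m%:C)%C); split; first by rewrite ler0c.
by move=> x; rewrite /nsq !nsqE -rmorphM lecR.
Qed.

Lemma bound_get (A : BH ip) : exists m : R, 0 <= m /\ forall x, N (op A x) <= m * N x.
Proof.
case: A => T [_ [M [M0 hM]]] /=.
exists (cRe M); split; first by rewrite -ler0c -real_ge0.
move=> x; have := hM x; by rewrite /nsq !nsqE (@real_ge0 _ M M0) -rmorphM lecR.
Qed.

Lemma opL (A : BH ip) a x y : op A (a *: x + y) = a *: op A x + op A y.
Proof. by case: A => T [h _] /=. Qed.
Lemma op0 (A : BH ip) : op A 0 = 0.
Proof.
have := opL A 1 0 0; rewrite scaler0 addr0 scale1r => H.
by move: H; rewrite -{1}(addr0 (op A 0)) => /addrI /esym.
Qed.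
Lemma opD (A : BH ip) x y : op A (x + y) = op A x + op A y.
Proof. by have := opL A 1 x y; rewrite !scale1r. Qed.
Lemma opZ (A : BH ip) a x : op A (a *: x) = a *: op A x.
Proof. by rewrite -[a *: x]addr0 opL op0 addr0. Qed.
Lemma opN (A : BH ip) x : op A (- x) = - op A x.
Proof. by rewrite -scaleN1r opZ scaleN1r. Qed.
Lemma opB (A : BH ip) x y : op A (x - y) = op A x - op A y.
Proof. by rewrite opD opN. Qed.

Definition mkBH {T : V -> V} (H : is_bounded_linear ip T) : BH ip := exist _ T H.

Lemma zero_bl : is_bounded_linear ip (fun _ : V => 0).
Proof.
split; first by move=> a x y; rewrite scaler0 addr0.
by apply: (@bound_of _ 0) => // x; rewrite mul0r /N ip0l.
Qed.
Definition Z0 : BH ip := mkBH zero_bl.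

Definition rk1 (y w : V) : V -> V := fun v => ip v w *: y.
Lemma rk1_bl y w : is_bounded_linear ip (rk1 y w).
Proof.
split.
  by move=> a x z; rewrite /rk1 ipDZl scalerDl scalerA.
apply: (@bound_of _ (N w * N y)); first by rewrite mulr_ge0 // N_ge0.
move=> x; rewrite /rk1 NZc.
have := CS x w; have := N_ge0 y; have := N_ge0 x; have := N_ge0 w. nra.
Qed.
Definition RK (y w : V) : BH ip := mkBH (rk1_bl y w).

End IP.

Section Proj.
Variables (R : realType) (V : lmodType R[i]) (ip : V -> V -> R[i]).
Hypothesis hI : is_inner_product ip.
Hypothesis hC : complete_ip ip.
Notation cRe := (@complex.Re R).
Local Notation N := (N ip).
Local Notation P := (P ip).

Definition eps (n : nat) : R := (n.+1%:R)^-1.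
Lemma eps_gt0 n : 0 < eps n.
Proof. by rewrite /eps invr_gt0 ltr0Sn. Qed.
Lemma eps_mono m n : (m <= n)%N -> eps n <= eps m.
Proof. by move=> h; rewrite /eps lef_pV2 ?posrE ?ltr0Sn // ler_nat ltnS. Qed.
Lemma eps_small (e : R) : 0 < e -> exists n, eps n < e.
Proof. by move=> /ltr_add_invr [k hk]; exists k; move: hk; rewrite add0r. Qed.

Lemma cplx_pos (e : R[i]) : 0 < e -> e = ((cRe e)%:C)%C /\ 0 < cRe e.
Proof.
move=> h; have h' := real_ge0 (ltW h); split => //.
by move: h; rewrite h' ltcR.
Qed.

Lemma conv_real (u : nat -> V) l : converges_to ip u l ->
  forall e : R, 0 < e -> exists n0, forall n, (n0 <= n)%N -> N (u n - l) < e.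
Proof.
move=> h e e0; have /h [n0 hn0] : 0 < (e%:C)%C by rewrite ltcR.
by exists n0 => n /hn0; rewrite /nsq nsqE // ltcR.
Qed.

Lemma cauchy_real (u : nat -> V) :
  (forall e : R, 0 < e -> exists n0, forall m n, (n0 <= m)%N -> (n0 <= n)%N -> N (u m - u n) < e) ->
  cauchy_seq ip u.
Proof.
move=> h e /cplx_pos [-> e0]; have [n0 hn0] := h _ e0.
by exists n0 => m n hm hn; rewrite /nsq nsqE // ltcR; apply: hn0.
Qed.

Lemma half_sc (x : V) : ((2^-1 : R)%:C)%C *: (x + x) = x.
Proof.
have e : (2^-1 + 2^-1 : R) = 1 by field.
by rewrite scalerDr -scalerDl -rmorphD e rmorph1 scale1r.
Qed.

Lemma paral a b : N (b - a) + N (a + b) = 2 * N a + 2 * N b.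
Proof. rewrite (ND hI a b) (NB hI b a) (PC hI b a). ring. Qed.

Lemma le0_eq0 (x : R) : 0 <= x -> (forall e, 0 < e -> x <= e) -> x = 0.
Proof.
move=> x0 h; apply/eqP; rewrite eq_le x0 andbT; apply/ler_addgt0Pr => e e0.
by rewrite add0r; apply: h.
Qed.

Lemma quad_zero (p n : R) : 0 <= n -> (forall t, 0 <= t * t * n + 2 * t * p) -> p = 0.
Proof.
move=> n0 h.
set s := n + 1.
have s0 : 0 < s by rewrite /s; lra.
have := h (- p / s).
have e : - p / s * (- p / s) * n + 2 * (- p / s) * p = - (p * p) * (n + 2) / (s * s).
  by rewrite /s; field; rewrite gt_eqF // -/s.
rewrite e => h2.
have h3 : 0 <= - (p * p) * (n + 2).
  have : 0 <= - (p * p) * (n + 2) / (s * s) * (s * s) by rewrite mulr_ge0 // mulr_ge0 // ltW.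
  by rewrite divfK // mulf_neq0 // gt_eqF.
nra.
Qed.

Lemma proj (B : BH ip) (x0 : V) :
  exists k, op B k = 0 /\ forall z, op B z = 0 -> ip (x0 - k) z = 0.
Proof.
pose S : classical_sets.set R := fun r => exists k, op B k = 0 /\ r = N (x0 - k).
have Sne : classical_sets.nonempty S by exists (N (x0 - 0)), 0; rewrite op0.
have Slb : classical_sets.has_lbound S.
  by exists 0 => r [k [_ ->]]; apply: N_ge0.
pose d := inf S.
have hd : forall k, op B k = 0 -> d <= N (x0 - k).
  by move=> k hk; apply: (ge_inf Slb); exists k.
have d0 : 0 <= d by apply: lb_le_inf => // r [k [_ ->]]; apply: N_ge0.
have approx : forall n, exists k, op B k = 0 /\ N (x0 - k) < d + eps n.
  move=> n; have : inf S < d + eps n by rewrite /d ltrDl eps_gt0.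
  by move=> /(inf_lt Sne) [r [k [hk ->]] hr]; exists k.
have [ks hks] := boolp.choice approx.
have par : forall m n, N (ks m - ks n) <= 2 * eps m + 2 * eps n.
  move=> m n.
  have [hm1 hm2] := hks m; have [hn1 hn2] := hks n.
  pose a := x0 - ks m; pose b := x0 - ks n.
  pose h := ((2^-1 : R)%:C)%C.
  pose mid := h *: (ks m + ks n).
  have Bmid : op B mid = 0 by rewrite opZ opD hm1 hn1 addr0 scaler0.
  have emid : x0 - mid = h *: (a + b).
    by rewrite /a /b /mid addrACA -opprD (scalerDr h (x0 + x0)) scalerN half_sc.
  have hdm := hd _ Bmid.
  rewrite emid NZ // in hdm.
  have eba : ks m - ks n = b - a by rewrite /a /b opprB [RHS]addrC addrA subrK.
  have hp := paral a b.
  rewrite eba.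
  have e4 : (2^-1 : R) * 2^-1 * N (a + b) = N (a + b) / 4 by field.
  rewrite e4 in hdm.
  rewrite -/a in hm2; rewrite -/b in hn2.
  lra.
have cau : cauchy_seq ip ks.
  apply: cauchy_real => e e0.
  have /eps_small [n0 hn0] : 0 < e / 4 by rewrite divr_gt0.
  exists n0 => m n hm hn.
  have := par m n; have := eps_mono hm; have := eps_mono hn. lra.
have [k hk] := hC cau.
have hkr := conv_real hk.
have [mB [mB0 hmB]] := bound_get hI B.
have Bk : op B k = 0.
  apply: (N_eq0 hI); apply: le0_eq0; first exact: N_ge0.
  move=> e e0.
  have /hkr [n0 hn0] : 0 < e / (mB + 1) by rewrite divr_gt0 //; lra.
  have := hmB (ks n0 - k); rewrite opB // (proj1 (hks n0)) sub0r NN //.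
  have := hn0 n0 (leqnn n0).
  have := N_ge0 hI (ks n0 - k).
  have ee : mB * (e / (mB + 1)) <= e.
    rewrite mulrA ler_pdivrMr; last lra.
    nra.
  nra.
pose x := x0 - k.
have hx : N x <= d.
  apply/ler_addgt0Pr => e e0.
  pose dl := e / (3 * (d + 1)).
  have dl0 : 0 < dl by rewrite divr_gt0 //; lra.
  pose et := e / (3 * (1 + dl^-1)).
  have et0 : 0 < et by rewrite divr_gt0 // mulr_gt0 //; rewrite ltr_wpDr // ?ltW ?invr_gt0 //.
  have /eps_small [n1 hn1] : 0 < e / 3 by rewrite divr_gt0.
  have /hkr [n2 hn2] := et0.
  pose n := maxn n1 n2.
  have hb := hn2 n (leq_maxr n1 n2).
  have he : eps n <= eps n1 := eps_mono (leq_maxl n1 n2).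
  have he1 : eps n <= 1 by have := eps_mono (leq0n n); rewrite /eps invr1.
  have ha := proj2 (hks n).
  have ex : x = (x0 - ks n) + (ks n - k) by rewrite /x addrA subrK.
  have hle := P_le hI (x0 - ks n) (ks n - k) dl0.
  have hND := ND hI (x0 - ks n) (ks n - k).
  rewrite -ex in hND.
  set Na := N (x0 - ks n) in ha hle hND.
  set Nb := N (ks n - k) in hb hle hND.
  have h1 : dl * Na <= dl * (d + 1) by rewrite ler_wpM2l ?ltW //; lra.
  have h2 : dl * (d + 1) = e / 3 by rewrite /dl; field; lra.
  have h3 : Nb / dl <= et / dl by rewrite ler_pM2r ?invr_gt0 // ltW.
  have h4 : et + et / dl = e / 3.
    have hdl1 : 0 < dl + 1 by lra.
    by rewrite /et; field; rewrite (gt_eqF dl0) (gt_eqF hdl1).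
  have h5 : 0 <= Nb := N_ge0 hI _.
  lra.
have key : forall z, op B z = 0 -> P x z = 0.
  move=> z hz; apply: (@quad_zero _ (N z)); first exact: N_ge0.
  move=> t.
  have hB : op B (k - ((t%:C)%C) *: z) = 0 by rewrite opB opZ hz Bk scaler0 subr0.
  have := hd _ hB.
  have -> : x0 - (k - ((t%:C)%C) *: z) = x + ((t%:C)%C) *: z by rewrite /x opprB (addrC _ (- k)) addrA.
  rewrite ND // NZ // PZr //.
  lra.
exists k; split => // z hz.
apply: ip_zero => //; first exact: key.
by apply: key; rewrite opZ hz scaler0.
Qed.
End Proj.

Section Main.
Variables (R : realType) (V : lmodType R[i]) (ip : V -> V -> R[i]).
Hypothesis hI : is_inner_product ip.
Hypothesis hC : complete_ip ip.
Notation cRe := (@complex.Re R).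
Local Notation N := (N ip).
Local Notation BH := (BH ip).

Definition E (A B : BH) := exists X, douglas_solution A B X.
Definition ZZ (A : BH) := forall B, E A B.
Definition Atom (A : BH) := ~ ZZ A /\ forall S, E S A -> ZZ S \/ E A S.

Lemma E_sub A B : E A B -> ran_sub A B.
Proof. by move=> [X [h1 _]] y [x <-]; exists (op X x). Qed.

Lemma ZZ_iff A : ZZ A <-> forall x, op A x = 0.
Proof.
split.
  by move=> /(_ (Z0 hI)) [X [h1 _]] x; rewrite -h1.
move=> h B; exists (Z0 hI); split => /=.
  by move=> x; rewrite h op0.
by move=> x y _; rewrite ip0l.
Qed.

Lemma sc_inj (c c' : R[i]) (e : V) : e != 0 -> c *: e = c' *: e -> c = c'.
Proof.
move=> e0 /eqP; rewrite -subr_eq0 -scalerBl scaler_eq0 (negbTE e0) orbF subr_eq0.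
by move/eqP.
Qed.

Lemma LemL (S B : BH) (e : V) : (forall v, exists c, op S v = c *: e) -> ran B e -> E S B.
Proof.
move=> hS [x0 hx0].
have [e0|en0] := eqVneq e 0.
  have hz : ZZ S by apply/ZZ_iff => v; have [c ->] := hS v; rewrite e0 scaler0.
  exact: hz B.
have [k [hk hko]] := proj hI hC B x0.
pose x1 := x0 - k.
have Bx1 : op B x1 = e by rewrite opB hk subr0.
have [f hf] := boolp.choice hS.
have flin : forall a u w, f (a *: u + w) = a * f u + f w.
  move=> a u w; apply: (sc_inj en0).
  by rewrite -hf opL !hf scalerDl scalerA.
have [mS [mS0 hmS]] := bound_get hI S.
have Ne0 : 0 < N e.
  rewrite lt0r N_ge0 // andbT; apply/eqP => h; move: en0; by rewrite (N_eq0 hI h) eqxx.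
have Xbl : is_bounded_linear ip (fun v => f v *: x1).
  split.
    by move=> a u w; rewrite flin scalerDl scalerA.
  apply: (@bound_of _ _ _ hI _ (mS * N x1 / N e)).
    by rewrite mulr_ge0 ?invr_ge0 ?mulr_ge0 ?N_ge0 // ltW.
  move=> v; rewrite NZc //.
  have := hmS v; rewrite hf NZc // => h.
  have hq : cRe (f v * (f v)^*) <= mS * N v / N e by rewrite ler_pdivlMr.
  have hq2 := ler_wpM2r (N_ge0 hI x1) hq.
  apply: (le_trans hq2).
  have -> : mS * N v / N e * N x1 = mS * N x1 / N e * N v by ring.
  done.
exists (mkBH Xbl); split => /=.
  by move=> v; rewrite opZ Bx1 -hf.
by move=> v y hy; rewrite (ipZl hI) /x1 (hko y hy) mulr0.
Qed.

Lemma RK_op y w v : op (RK hI y w) v = ip v w *: y.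
Proof. by []. Qed.

Lemma ipxx_neq0 x : x != 0 -> ip x x != 0.
Proof. by move=> xn; apply/eqP => /(ip_eq0 hI) h; move: xn; rewrite h eqxx. Qed.

Lemma RK_ran y w z : w != 0 -> (ran (RK hI y w) z <-> exists c, z = c *: y).
Proof.
move=> wn; split.
  by move=> [v <-]; exists (ip v w).
move=> [c ->]; exists ((c / ip w w) *: w); rewrite RK_op (ipZl hI) -mulrA mulVf ?mulr1 //.
exact: ipxx_neq0.
Qed.

Lemma RK_rank_one y w : y != 0 -> w != 0 -> rank_one (RK hI y w).
Proof.
move=> yn wn; exists y; split; first exact/eqP.
by move=> z; apply: RK_ran.
Qed.

Lemma not_ZZ A : ~ ZZ A -> exists x, op A x != 0.
Proof.
move=> nz; case: (boolp.pselect (exists x, op A x != 0)) => // hn.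
exfalso; apply: nz; apply/ZZ_iff => x.
by case: (eqVneq (op A x) 0) => // h; exfalso; apply: hn; exists x.
Qed.

Lemma rank_one_Atom A : rank_one A -> Atom A.
Proof.
move=> [e [e0 he]].
have heA : ran A e by apply/he; exists 1; rewrite scale1r.
split.
  move=> /ZZ_iff hz; case: heA => x hx; apply: e0; by rewrite -hx hz.
move=> S hSA.
case: (boolp.pselect (exists v, op S v != 0)) => [[v0 hv0]|hn]; last first.
  left; apply/ZZ_iff => x.
  by case: (eqVneq (op S x) 0) => // h; exfalso; apply: hn; exists x.
right.
have [c0 hc0] : exists c, op S v0 = c *: e.
  by apply/he; apply: (E_sub hSA); exists v0.
have c0n : c0 != 0 by apply/eqP => h; move: hv0; rewrite hc0 h scale0r eqxx.
apply: (@LemL _ _ e).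
  by move=> v; apply/he; exists v.
exists (c0^-1 *: v0); by rewrite opZ hc0 scalerA mulVf // scale1r.
Qed.

Lemma Atom_rank_one A : Atom A -> rank_one A.
Proof.
move=> [nz hA].
have [x hx] := not_ZZ nz.
set y := op A x in hx.
have xn : x != 0 by apply/eqP => h; move: hx; rewrite /y h op0 eqxx.
pose S := RK hI y x.
have hSA : E S A.
  apply: (@LemL _ _ y); first by move=> v; exists (ip v x).
  by exists x.
have nzS : ~ ZZ S.
  move=> /ZZ_iff /(_ x); rewrite RK_op => /eqP; rewrite scaler_eq0 (negbTE (ipxx_neq0 xn)).
  by rewrite (negbTE hx).
case: (hA S hSA) => // /E_sub hAS.
exists y; split; first exact/eqP.
move=> z; split.
  by move=> /hAS /RK_ran; apply.
by move=> [c ->]; exists (c *: x); rewrite opZ.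
Qed.

Lemma sub_char A B : ran_sub A B <-> forall Q, Atom Q -> E Q A -> E Q B.
Proof.
split.
  move=> hAB Q /Atom_rank_one [e [e0 he]] /E_sub hQA.
  apply: (@LemL _ _ e).
    by move=> v; apply/he; exists v.
  by apply: hAB; apply: hQA; apply/he; exists 1; rewrite scale1r.
move=> h z [x <-].
have [y0|yn] := eqVneq (op A x) 0.
  by rewrite y0; exists 0; rewrite op0.
have xn : x != 0 by apply/eqP => hx; move: yn; rewrite hx op0 eqxx.
pose Q := RK hI (op A x) x.
have hQ : Atom Q by apply: rank_one_Atom; apply: RK_rank_one.
have hQA : E Q A.
  apply: (@LemL _ _ (op A x)); first by move=> v; exists (ip v x).
  by exists x.
have := E_sub (h Q hQ hQA); apply.
by apply/RK_ran => //; exists 1; rewrite scale1r.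
Qed.

End Main.

Section Phi.
Variables (R : realType) (V : lmodType R[i]) (ip : V -> V -> R[i]).
Hypothesis hI : is_inner_product ip.
Hypothesis hC : complete_ip ip.
Variables (phi g : BH ip -> BH ip).
Hypothesis gK : cancel phi g.
Hypothesis phiK : cancel g phi.
Hypothesis hD : preserves_douglas_both phi.

Lemma E_phi A B : E A B <-> E (phi A) (phi B).
Proof.
split; first by move=> [X h]; exists (phi X); apply: (proj1 (hD _ _ _)).
move=> [Y h]; exists (g Y); apply: (proj2 (hD _ _ _)); by rewrite phiK.
Qed.

Lemma ZZ_phi A : ZZ A <-> ZZ (phi A).
Proof.
split.
  by move=> h B; rewrite -(phiK B); apply: (proj1 (E_phi _ _)).
by move=> h B; apply: (proj2 (E_phi _ _)).
Qed.

Lemma Atom_phi A : Atom A <-> Atom (phi A).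
Proof.
split.
  move=> [nz h]; split.
    by move=> hz; apply: nz; apply: (proj2 (ZZ_phi A)).
  move=> S; rewrite -(phiK S) => hS.
  have := h _ (proj2 (E_phi _ _) hS); case => hh.
    by left; apply: (proj1 (ZZ_phi _)).
  by right; apply: (proj1 (E_phi _ _)).
move=> [nz h]; split.
  by move=> hz; apply: nz; apply: (proj1 (ZZ_phi A)).
move=> S hS.
have := h _ (proj1 (E_phi _ _) hS); case => hh.
  by left; apply: (proj2 (ZZ_phi _)).
by right; apply: (proj2 (E_phi _ _)).
Qed.

Lemma sub_phi A B : ran_sub A B <-> ran_sub (phi A) (phi B).
Proof.
rewrite (sub_char hI hC) (sub_char hI hC); split.
  move=> h Q; rewrite -(phiK Q) => hQ hQA.
  apply: (proj1 (E_phi _ _)); apply: h.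
    exact: (proj2 (Atom_phi _)).
  exact: (proj2 (E_phi _ _)).
move=> h Q hQ hQA.
apply: (proj2 (E_phi _ _)); apply: h.
  exact: (proj1 (Atom_phi _)).
exact: (proj1 (E_phi _ _)).
Qed.

Lemma rk_phi A : rank_one A <-> rank_one (phi A).
Proof.
split => h.
  apply: (Atom_rank_one hI hC); apply: (proj1 (Atom_phi _)); exact: (rank_one_Atom hI hC).
apply: (Atom_rank_one hI hC); apply: (proj2 (Atom_phi _)); exact: (rank_one_Atom hI hC).
Qed.
End Phi.

Theorem mainTheorem6 (R : realType) (V : lmodType R[i]) (ip : V -> V -> R[i])
  (hH : is_hilbert_space ip) (phi : BH ip -> BH ip)
  (hbij : bijective phi) (hD : preserves_douglas_both phi) :
  (forall A B : BH ip, ran_sub A B <-> ran_sub (phi A) (phi B)) /\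
  (forall B : BH ip, rank_one B -> rank_one (phi B)) /\
  (forall A A' : BH ip, same_set (ran A) (ran A') ->
     same_set (ran (phi A)) (ran (phi A'))) /\
  (forall L : V -> Prop, is_line L ->
     exists L' : V -> Prop, is_line L' /\ maps_subspace phi L L') /\
  (forall L' : V -> Prop, is_line L' ->
     exists L : V -> Prop, is_line L /\ maps_subspace phi L L') /\
  (forall L1 L2 L' : V -> Prop, is_line L1 -> is_line L2 ->
     maps_subspace phi L1 L' -> maps_subspace phi L2 L' -> same_set L1 L2).
Proof.
case: hH => hI hC _.
case: hbij => g gK phiK.
have sub := sub_phi hI hC phiK hD.
have rk := rk_phi hI hC phiK hD.
have same : forall A A' : BH ip, same_set (ran A) (ran A') <-> same_set (ran (phi A)) (ran (phi A')).
  move=> A A'; split => h.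
    have [h1 h2] : ran_sub A A' /\ ran_sub A' A by split => y /h.
    move/sub: h1 => h1; move/sub: h2 => h2.
    by move=> y; split => hy; [exact: (h1 y hy)|exact: (h2 y hy)].
  have [h1 h2] : ran_sub (phi A) (phi A') /\ ran_sub (phi A') (phi A) by split => y /h.
  move/(sub A A'): h1 => h1; move/(sub A' A): h2 => h2.
  by move=> y; split => hy; [exact: (h1 y hy)|exact: (h2 y hy)].
have lineA : forall L : V -> Prop, is_line L -> exists A : BH ip, same_set (ran A) L /\ rank_one A.
  move=> L [e [e0 he]].
  have en : e != 0 by apply/eqP.
  exists (RK hI e e); split; last exact: RK_rank_one.
  move=> y; rewrite (RK_ran hI _ _ en); by rewrite he.
have same_trans : forall P Q S : V -> Prop, same_set P Q -> same_set Q S -> same_set P S.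
  by move=> P Q S h1 h2 y; rewrite h1 h2.
have same_sym : forall P Q : V -> Prop, same_set P Q -> same_set Q P.
  by move=> P Q h y; rewrite h.
split; first exact: sub.
split; first by move=> B /rk.
split; first by move=> A A' /same.
split.
  move=> L /lineA [A [hA rA]].
  exists (ran (phi A)); split; first exact: (proj1 (rk A) rA).
  split; first by exists A.
  move=> A' hA'; apply: (proj1 (same _ _)); exact: (same_trans _ _ _ hA' (same_sym _ _ hA)).
split.
  move=> L' /lineA [A' [hA' rA']].
  exists (ran (g A')); split.
    by apply: (proj2 (rk _)); rewrite phiK.
  split; first by exists (g A') => y.
  move=> A hA.
  have := (proj1 (same A (g A'))) hA; rewrite phiK => h.
  exact: same_trans _ _ _ h hA'.
move=> L1 L2 L' _ _ [[A1 h1] m1] [[A2 h2] m2].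
have e1 := m1 _ h1; have e2 := m2 _ h2.
have : same_set (ran A1) (ran A2).
  apply: (proj2 (same _ _)); exact: same_trans _ _ _ e1 (same_sym _ _ e2).
move=> h12.
exact: same_trans _ _ _ (same_sym _ _ h1) (same_trans _ _ _ h12 h2).
Qed.
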